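(* Let $p,l$ be distinct odd primes and let $\Gamma=\psi(\tilde\Gamma)$ be the group described in the context. If $\Gamma_1$ and $\Gamma_2$ are maximal abelian subgroups of $\Gamma$ with $\Gamma_1\neq\Gamma_2$, then $\Gamma_1\cap\Gamma_2=\{1\}$.
   Context: Let $p,l$ be distinct odd primes. Let $\mathbb H(\mathbb Z)$ be the ring of quaternions $x=x_0+x_1i+x_2j+x_3k$ with $x_0,\dots,x_3\in\mathbb Z$, where $i^2=j^2=k^2=-1$, $ij=-ji=k$; write $|x|^2=x_0^2+x_1^2+x_2^2+x_3^2$. Fix $c_p,d_p\in\mathbb Q_p$ with $c_p^2+d_p^2+1=0$ and $c_l,d_l\in\mathbb Q_l$ with $c_l^2+d_l^2+1=0$. Define $\psi:\mathbb H(\mathbb Z)\setminus\{0\}\to G:=PGL_2(\mathbb Q_p)\times PGL_2(\mathbb Q_l)$ by sending $x$ to the class of the pair $\left(\begin{pmatrix} x_0+x_1c_p+x_3d_p & -x_1d_p+x_2+x_3c_p\\ -x_1d_p-x_2+x_3c_p & x_0-x_1c_p-x_3d_p\end{pmatrix},\begin{pmatrix} x_0+x_1c_l+x_3d_l & -x_1d_l+x_2+x_3c_l\\ -x_1d_l-x_2+x_3c_l & x_0-x_1c_l-x_3d_l\end{pmatrix}\right)$. Let $\tilde\Gamma$ be the set of $x\in\mathbb H(\mathbb Z)$ such that $|x|^2=p^rl^s$ for some integers $r,s\ge 0$, and such that $x_0$ is odd and $x_1,x_2,x_3$ are even if $|x|^2\equiv 1\pmod 4$, while $x_1$ is even and $x_0,x_2,x_3$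 are odd if $|x|^2\equiv 3\pmod 4$. Then $\Gamma=\psi(\tilde\Gamma)$ is a torsion-free cocompact lattice in $G$. *)

(* Defs.v *)
From HB Require Import structures.
From mathcomp Require Import all_boot all_order all_algebra.
Set Implicit Arguments. Unset Strict Implicit. Unset Printing Implicit Defensive.
Import Order.TTheory GRing.Theory Num.Theory.
Local Open Scope ring_scope.

Definition mx2 (K : fieldType) (a b c d : K) : 'M[K]_2 :=
  \matrix_(i < 2, j < 2)
    if val i == 0%N then (if val j == 0%N then a else b)
    else (if val j == 0%N then c else d).

(* The matrix attached to the integral quaternion x0 + x1 i + x2 j + x3 k
   using c, d with c^2 + d^2 + 1 = 0 (one component of psi). *)
Definition psi1 (K : fieldType) (c d : K) (x0 x1 x2 x3 : int) : 'M[K]_2 :=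
  let y0 : K := x0%:~R in let y1 : K := x1%:~R in
  let y2 : K := x2%:~R in let y3 : K := x3%:~R in
  mx2 (y0 + y1 * c + y3 * d) (- (y1 * d) + y2 + y3 * c)
      (- (y1 * d) - y2 + y3 * c) (y0 - y1 * c - y3 * d).

Definition in_tGamma (p l : nat) (x0 x1 x2 x3 : int) : Prop :=
  exists r s : nat,
    x0 ^+ 2 + x1 ^+ 2 + x2 ^+ 2 + x3 ^+ 2 = ((p ^ r * l ^ s)%N)%:Z /\
    (((p ^ r * l ^ s) %% 4)%N = 1%N ->
       [/\ odd `|x0|%N, ~~ odd `|x1|%N, ~~ odd `|x2|%N & ~~ odd `|x3|%N]) /\
    (((p ^ r * l ^ s) %% 4)%N = 3%N ->
       [/\ ~~ odd `|x1|%N, odd `|x0|%N, odd `|x2|%N & odd `|x3|%N]).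

(* Elements of PGL_2(Kp) x PGL_2(Kl) are represented by pairs of matrices;
   two representatives give the same element iff they agree up to nonzero
   scalars in each component. *)
Definition GG (Kp Kl : fieldType) := ('M[Kp]_2 * 'M[Kl]_2)%type.

Definition proj_eq (Kp Kl : fieldType) (g h : GG Kp Kl) : Prop :=
  exists (a : Kp) (b : Kl),
    [/\ a != 0, b != 0, g.1 = a *: h.1 & g.2 = b *: h.2].

Definition gmul (Kp Kl : fieldType) (g h : GG Kp Kl) : GG Kp Kl :=
  (g.1 *m h.1, g.2 *m h.2).
Definition ginv (Kp Kl : fieldType) (g : GG Kp Kl) : GG Kp Kl :=
  (invmx g.1, invmx g.2).
Definition gone (Kp Kl : fieldType) : GG Kp Kl := (1%:M, 1%:M).

(* Gamma = psi(\tilde\Gamma), as a (projectively saturated) set of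
   representatives. *)
Definition Gamma (p l : nat) (Kp Kl : fieldType) (cp dp : Kp) (cl dl : Kl)
  (g : GG Kp Kl) : Prop :=
  exists x0 x1 x2 x3 : int, in_tGamma p l x0 x1 x2 x3 /\
    proj_eq g (psi1 cp dp x0 x1 x2 x3, psi1 cl dl x0 x1 x2 x3).

Definition is_subgroup (Kp Kl : fieldType) (G H : GG Kp Kl -> Prop) : Prop :=
  [/\ (forall g, H g -> G g),
      (forall g h, H g -> proj_eq g h -> H h),
      H (gone Kp Kl),
      (forall g h, H g -> H h -> H (gmul g h)) &
      (forall g, H g -> H (ginv g))].

Definition is_abelian (Kp Kl : fieldType) (H : GG Kp Kl -> Prop) : Prop :=
  forall g h, H g -> H h -> proj_eq (gmul g h) (gmul h g).

Definition maximal_abelian (Kp Kl : fieldType) (G H : GG Kp Kl -> Prop) : Prop :=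
  [/\ is_subgroup G H, is_abelian H &
      forall H', is_subgroup G H' -> is_abelian H' ->
        (forall g, H g -> H' g) -> forall g, H' g -> H g].

(* Main.v *)
Require Import Defs.
From HB Require Import structures.
From mathcomp Require Import all_boot all_order all_algebra.
From mathcomp Require Import zify ring.
Import Order.TTheory GRing.Theory Num.Theory.
Local Open Scope ring_scope.
Set Implicit Arguments. Unset Strict Implicit.

Record quat := Q { q0 : int; q1 : int; q2 : int; q3 : int }.

Definition qmul (x y : quat) : quat :=
  Q (q0 x * q0 y - q1 x * q1 y - q2 x * q2 y - q3 x * q3 y)
    (q0 x * q1 y + q1 x * q0 y + q2 x * q3 y - q3 x * q2 y)
    (q0 x * q2 y - q1 x * q3 y + q2 x * q0 y + q3 x * q1 y)
    (q0 x * q3 y + q1 x * q2 y - q2 x * q1 y + q3 x * q0 y).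
Definition qconj x := Q (q0 x) (- q1 x) (- q2 x) (- q3 x).
Definition qone := Q 1 0 0 0.
Definition qnorm x := q0 x ^+ 2 + q1 x ^+ 2 + q2 x ^+ 2 + q3 x ^+ 2.

Lemma qeq x y : q0 x = q0 y -> q1 x = q1 y -> q2 x = q2 y -> q3 x = q3 y -> x = y.
Proof. by case: x; case: y => /= ? ? ? ? ? ? ? ? -> -> -> ->. Qed.

Lemma qmulA x y z : qmul x (qmul y z) = qmul (qmul x y) z.
Proof. by apply: qeq => /=; ring. Qed.
Lemma qmul1 x : qmul x qone = x.
Proof. by apply: qeq => /=; ring. Qed.
Lemma qmul1l x : qmul qone x = x.
Proof. by apply: qeq => /=; ring. Qed.
Lemma qconjM x y : qconj (qmul x y) = qmul (qconj y) (qconj x).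
Proof. by apply: qeq => /=; ring. Qed.
Lemma qmul_conj x : qmul x (qconj x) = Q (qnorm x) 0 0 0.
Proof. by apply: qeq => /=; rewrite /qnorm; ring. Qed.
Lemma qnormM x y : qnorm (qmul x y) = qnorm x * qnorm y.
Proof. rewrite /qnorm /=; ring. Qed.
Lemma qnorm_conj x : qnorm (qconj x) = qnorm x.
Proof. rewrite /qnorm /=; ring. Qed.

Lemma parD (x y : int) : odd `|x + y| = odd `|x| (+) odd `|y|.
Proof. lia. Qed.
Lemma parN (x : int) : odd `|- x| = odd `|x|.
Proof. by rewrite abszN. Qed.
Lemma parM (x y : int) : odd `|x * y| = odd `|x| && odd `|y|.
Proof. by rewrite abszM oddM. Qed.

Lemma cross3 (xi xj xk yi yj yk zi zj zk : int) :
  zk*xi = xk*zi -> zi*yj = zj*yi -> xk*zj = zk*xj -> zk*(xi*yj - xj*yi) = 0.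
Proof.
move=> h1 h2 h3.
have -> : zk*(xi*yj - xj*yi) = yj*(zk*xi - xk*zi) + xk*(zi*yj - zj*yi) + yi*(xk*zj - zk*xj) by ring.
by rewrite h1 h2 h3 !subrr !mulr0 !addr0.
Qed.


Definition typeA x := [&& odd `|q0 x|, ~~ odd `|q1 x|, ~~ odd `|q2 x| & ~~ odd `|q3 x|].
Definition typeB x := [&& odd `|q0 x|, ~~ odd `|q1 x|, odd `|q2 x| & odd `|q3 x|].

Lemma typeAA x y : typeA x -> typeA y -> typeA (qmul x y).
Proof. rewrite /typeA /qmul /= !parD !parN !parM => /and4P[-> /negbTE-> /negbTE-> /negbTE->] /and4P[-> /negbTE-> /negbTE-> /negbTE->].
 by []. Qed.
Lemma typeAB x y : typeA x -> typeB y -> typeB (qmul x y).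
Proof. rewrite /typeA /typeB /qmul /= !parD !parN !parM => /and4P[-> /negbTE-> /negbTE-> /negbTE->] /and4P[-> /negbTE-> -> ->].
 by []. Qed.
Lemma typeBA x y : typeB x -> typeA y -> typeB (qmul x y).
Proof. rewrite /typeA /typeB /qmul /= !parD !parN !parM => /and4P[-> /negbTE-> -> ->] /and4P[-> /negbTE-> /negbTE-> /negbTE->].
 by []. Qed.
Lemma typeBB x y : typeB x -> typeB y -> typeA (qmul x y).
Proof. rewrite /typeA /typeB /qmul /= !parD !parN !parM => /and4P[-> /negbTE-> -> ->] /and4P[-> /negbTE-> -> ->].
 by []. Qed.

Lemma typeAB_re x y : typeA x || typeB x -> typeA y || typeB y -> odd `|q0 (qmul x y)|.
Proof.
case/orP=> hx; case/orP=> hy.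
- by case/and4P: (typeAA hx hy).
- by case/and4P: (typeAB hx hy).
- by case/and4P: (typeBA hx hy).
- by case/and4P: (typeBB hx hy).
Qed.

Lemma typeA_conj x : typeA x -> typeA (qconj x).
Proof. by rewrite /typeA /= !parN. Qed.
Lemma typeB_conj x : typeB x -> typeB (qconj x).
Proof. by rewrite /typeB /= !parN. Qed.

Lemma oddE (z : int) : odd `|z| -> exists k, z = 2 * k + 1.
Proof. move=> h; exists ((z - 1) %/ 2)%Z; lia. Qed.
Lemma evenE (z : int) : ~~ odd `|z| -> exists k, z = 2 * k.
Proof. move=> h; exists (z %/ 2)%Z; lia. Qed.

Lemma typeA_norm x : typeA x -> exists k, qnorm x = 4 * k + 1.
Proof.
rewrite /qnorm; case/and4P=> /oddE[a ->] /evenE[b ->] /evenE[c ->] /evenE[d ->].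
exists (a^+2 + a + b^+2 + c^+2 + d^+2); ring.
Qed.
Lemma typeB_norm x : typeB x -> exists k, qnorm x = 4 * k + 3.
Proof.
rewrite /qnorm; case/and4P=> /oddE[a ->] /evenE[b ->] /oddE[c ->] /oddE[d ->].
exists (a^+2 + a + b^+2 + c^+2 + c + d^+2 + d); ring.
Qed.

Definition inG (p l : nat) x := in_tGamma p l (q0 x) (q1 x) (q2 x) (q3 x).

Lemma inG_iff p l x : odd p -> odd l ->
  inG p l x <-> (exists r s : nat, qnorm x = ((p ^ r * l ^ s)%N)%:Z) /\ (typeA x || typeB x).
Proof.
move=> op ol; split.
- case=> r [s [hn [h1 h3]]]; split; first by exists r, s.
  have od : odd (p ^ r * l ^ s) by rewrite oddM !oddX op ol !orbT.
  have : ((p ^ r * l ^ s) %% 4 = 1)%N \/ ((p ^ r * l ^ s) %% 4 = 3)%N by lia.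
  case=> [/h1 | /h3]; first by case=> *; apply/orP; left; apply/and4P.
  by case=> *; apply/orP; right; apply/and4P.
- case=> [[r [s hn]] hab]; exists r, s; split; first exact: hn.
  case/orP: hab => [hA | hB].
  + have [k hk] := typeA_norm hA; move: hn; rewrite hk => hn.
    split; first by move=> _; case/and4P: hA.
    move=> h; exfalso; lia.
  + have [k hk] := typeB_norm hB; move: hn; rewrite hk => hn.
    split; last by move=> _; case/and4P: hB.
    move=> h; exfalso; lia.
Qed.

Lemma inG_mul p l x y : odd p -> odd l -> inG p l x -> inG p l y -> inG p l (qmul x y).
Proof.
move=> op ol /(inG_iff _ op ol)[[r [s hx]] tx] /(inG_iff _ op ol)[[r' [s' hy]] ty].
apply/(inG_iff _ op ol); split.
  exists (r + r')%N, (s + s')%N; rewrite qnormM hx hy -PoszM; congr Posz.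
  by rewrite !expnD; lia.
case/orP: tx => hx'; case/orP: ty => hy'.
- by rewrite typeAA.
- by rewrite typeAB ?orbT.
- by rewrite typeBA ?orbT.
- by rewrite typeBB.
Qed.

Lemma inG_conj p l x : odd p -> odd l -> inG p l x -> inG p l (qconj x).
Proof.
move=> op ol /(inG_iff _ op ol)[[r [s hx]] tx].
apply/(inG_iff _ op ol); split; first by exists r, s; rewrite qnorm_conj.
by case/orP: tx => h; [rewrite typeA_conj | rewrite typeB_conj ?orbT].
Qed.

Lemma inG_one p l : odd p -> odd l -> inG p l qone.
Proof.
move=> op ol; apply/(inG_iff _ op ol); split; last by [].
by exists 0%N, 0%N.
Qed.

Lemma inG_re p l x : odd p -> odd l -> inG p l x -> odd `|q0 x|.
Proof. by move=> op ol /(inG_iff _ op ol)[_ /orP[/and4P[]|/and4P[]]]. Qed.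

Lemma inG_norm p l x : odd p -> odd l -> inG p l x -> exists n : nat, qnorm x = n%:Z /\ (0 < n)%N.
Proof.
move=> op ol /(inG_iff _ op ol)[[r [s hx]] _]; exists (p ^ r * l ^ s)%N; split => //.
have od : odd (p ^ r * l ^ s) by rewrite oddM !oddX op ol !orbT.
by case: (p ^ r * l ^ s)%N od.
Qed.


Definition P (K : fieldType) (c d : K) x := psi1 c d (q0 x) (q1 x) (q2 x) (q3 x).

Lemma P_mul (K : fieldType) (c d : K) (hcd : c ^+ 2 + d ^+ 2 + 1 = 0) x y :
  P c d x *m P c d y = P c d (qmul x y).
Proof.
apply/matrixP=> i j; rewrite !mxE !big_ord_recr big_ord0 /= !mxE add0r /=.
case: x => x0 x1 x2 x3; case: y => y0 y1 y2 y3 /=.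
case: i => [[|[|//]] Hi]; case: j => [[|[|//]] Hj] /=; rewrite !(intrD, intrN, intrM);
  apply/eqP; rewrite -subr_eq0; apply/eqP.
- transitivity ((x1%:~R * y1%:~R + x3%:~R * y3%:~R) * (c ^+ 2 + d ^+ 2 + 1)); first ring.
  by rewrite hcd mulr0.
- transitivity ((x1%:~R * y3%:~R - x3%:~R * y1%:~R) * (c ^+ 2 + d ^+ 2 + 1)); first ring.
  by rewrite hcd mulr0.
- transitivity ((x3%:~R * y1%:~R - x1%:~R * y3%:~R) * (c ^+ 2 + d ^+ 2 + 1)); first ring.
  by rewrite hcd mulr0.
- transitivity ((x1%:~R * y1%:~R + x3%:~R * y3%:~R) * (c ^+ 2 + d ^+ 2 + 1)); first ring.
  by rewrite hcd mulr0.
Qed.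

Lemma P_scal (K : fieldType) (c d : K) z : P c d (Q z 0 0 0) = z%:~R *: 1%:M.
Proof.
apply/matrixP=> i j; rewrite !mxE /=.
case: i => [[|[|//]] Hi]; case: j => [[|[|//]] Hj] /=; rewrite ?mulr1 ?mulr0; ring.
Qed.

Lemma P_entries (K : fieldType) (c d : K) (hcd : c ^+ 2 + d ^+ 2 + 1 = 0)
  (h2 : 2%:R != 0 :> K) x y a :
  P c d x = a *: P c d y ->
  [/\ (q0 x)%:~R = a * (q0 y)%:~R, (q1 x)%:~R = a * (q1 y)%:~R,
      (q2 x)%:~R = a * (q2 y)%:~R & (q3 x)%:~R = a * (q3 y)%:~R :> K].
Proof.
move=> h.
have E := fun i j => congr1 (fun M : 'M_2 => M i j) h.
have E00 := E 0 0; have E01 := E 0 1; have E10 := E 1 0; have E11 := E 1 1.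
move: E00 E01 E10 E11; rewrite !mxE /=; clear E h.
case: x => x0 x1 x2 x3; case: y => y0 y1 y2 y3 /=.
set X0 := (x0%:~R : K); set X1 := (x1%:~R : K); set X2 := (x2%:~R : K); set X3 := (x3%:~R : K).
set Y0 := (y0%:~R : K); set Y1 := (y1%:~R : K); set Y2 := (y2%:~R : K); set Y3 := (y3%:~R : K).
move=> e00 e01 e10 e11.
pose f0 := X0 - a * Y0; pose f1 := X1 - a * Y1; pose f2 := X2 - a * Y2; pose f3 := X3 - a * Y3.
have z2 : forall u : K, 2%:R * u = 0 -> u = 0.
  by move=> u /eqP; rewrite mulf_eq0 (negbTE h2) => /eqP.
have s : forall u v : K, u - v = 0 -> u = v by move=> u v /eqP; rewrite subr_eq0 => /eqP.
have g0 : f0 = 0.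
  apply: z2; transitivity ((X0 + X1 * c + X3 * d - a * (Y0 + Y1 * c + Y3 * d)) + (X0 - X1 * c - X3 * d - a * (Y0 - Y1 * c - Y3 * d))); first by rewrite /f0; ring.
  by rewrite ?e00 ?e11 ?e01 ?e10 ?hcd !subrr; ring.
have g2 : f2 = 0.
  apply: z2; transitivity ((- (X1 * d) + X2 + X3 * c - a * (- (Y1 * d) + Y2 + Y3 * c)) - (- (X1 * d) - X2 + X3 * c - a * (- (Y1 * d) - Y2 + Y3 * c))); first by rewrite /f2; ring.
  by rewrite ?e00 ?e11 ?e01 ?e10 ?hcd !subrr; ring.
have g1 : f1 = 0.
  apply: z2; apply: oppr_inj; rewrite oppr0.
  transitivity (c * ((X0 + X1 * c + X3 * d - a * (Y0 + Y1 * c + Y3 * d)) - (X0 - X1 * c - X3 * d - a * (Y0 - Y1 * c - Y3 * d))) - d * ((- (X1 * d) + X2 + X3 * c - a * (- (Y1 * d) + Y2 + Y3 * c)) + (- (X1 * d) - X2 + X3 * c - a * (- (Y1 * d) - Y2 + Y3 * c))) - 2%:R * f1 * (c ^+ 2 + d ^+ 2 + 1)); first by rewrite /f1; ring.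
  by rewrite ?e00 ?e11 ?e01 ?e10 ?hcd !subrr; ring.
have g3 : f3 = 0.
  apply: z2; apply: oppr_inj; rewrite oppr0.
  transitivity (d * ((X0 + X1 * c + X3 * d - a * (Y0 + Y1 * c + Y3 * d)) - (X0 - X1 * c - X3 * d - a * (Y0 - Y1 * c - Y3 * d))) + c * ((- (X1 * d) + X2 + X3 * c - a * (- (Y1 * d) + Y2 + Y3 * c)) + (- (X1 * d) - X2 + X3 * c - a * (- (Y1 * d) - Y2 + Y3 * c))) - 2%:R * f3 * (c ^+ 2 + d ^+ 2 + 1)); first by rewrite /f3; ring.
  by rewrite ?e00 ?e11 ?e01 ?e10 ?hcd !subrr; ring.
by split; apply: s.
Qed.


Lemma natr_neq0 (K : fieldType) (ch : [pchar K] =i pred0) n : (0 < n)%N -> n%:R != 0 :> K.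
Proof. by move=> hn; rewrite ((pcharf0P K).1 ch); case: n hn. Qed.

Lemma intr0_inj (K : fieldType) (ch : [pchar K] =i pred0) (z : int) : (z%:~R : K) = 0 -> z = 0.
Proof.
case: z => n /=.
  by move=> /eqP; rewrite ((pcharf0P K).1 ch) => /eqP ->.
rewrite NegzE intrN => /eqP; rewrite oppr_eq0 => /eqP h.
by case/eqP: (natr_neq0 ch (ltn0Sn n)); exact: h.
Qed.

Lemma intr_inj' (K : fieldType) (ch : [pchar K] =i pred0) (x y : int) :
  (x%:~R : K) = y%:~R -> x = y.
Proof.
move=> h; apply/eqP; rewrite -subr_eq0; apply/eqP; apply: (intr0_inj ch).
by rewrite intrD intrN h subrr.
Qed.

Lemma intr_odd_neq0 (K : fieldType) (ch : [pchar K] =i pred0) (z : int) :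
  odd `|z| -> (z%:~R : K) != 0.
Proof. by move=> h; apply/eqP => /(intr0_inj ch) hz; rewrite hz in h. Qed.

Lemma P_one (K : fieldType) (c d : K) : P c d qone = 1%:M.
Proof. by rewrite /qone P_scal scale1r. Qed.

Lemma P_inv (K : fieldType) (ch : [pchar K] =i pred0) (c d : K)
  (hcd : c ^+ 2 + d ^+ 2 + 1 = 0) x n :
  qnorm x = n%:Z -> (0 < n)%N ->
  P c d x \in unitmx /\ invmx (P c d x) = (n%:R)^-1 *: P c d (qconj x).
Proof.
move=> hn n0.
have hM : P c d x *m ((n%:R)^-1 *: P c d (qconj x)) = 1%:M.
  rewrite -scalemxAr P_mul // qmul_conj P_scal hn scalerA mulVf ?scale1r //.
  exact: natr_neq0.
have [u _] := mulmx1_unit hM.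
split => //.
by rewrite -[RHS]mul1mx -(mulVmx u) -mulmxA hM mulmx1.
Qed.

Definition Psi (Kp Kl : fieldType) (cp dp : Kp) (cl dl : Kl) x : GG Kp Kl :=
  (P cp dp x, P cl dl x).

Lemma pe_refl (Kp Kl : fieldType) (g : GG Kp Kl) : proj_eq g g.
Proof. by exists 1, 1; rewrite !scale1r !oner_eq0. Qed.

Lemma pe_sym (Kp Kl : fieldType) (g h : GG Kp Kl) : proj_eq g h -> proj_eq h g.
Proof.
case=> a [b [a0 b0 e1 e2]]; exists a^-1, b^-1; split; rewrite ?invr_eq0 //.
  by rewrite e1 scalerA mulVf ?scale1r.
by rewrite e2 scalerA mulVf ?scale1r.
Qed.

Lemma pe_trans (Kp Kl : fieldType) (g h k : GG Kp Kl) :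
  proj_eq g h -> proj_eq h k -> proj_eq g k.
Proof.
case=> a [b [a0 b0 e1 e2]] [a' [b' [a0' b0' e1' e2']]].
exists (a * a'), (b * b'); split; rewrite ?mulf_neq0 //.
  by rewrite e1 e1' scalerA.
by rewrite e2 e2' scalerA.
Qed.

Lemma pe_mul (Kp Kl : fieldType) (g g' h h' : GG Kp Kl) :
  proj_eq g g' -> proj_eq h h' -> proj_eq (gmul g h) (gmul g' h').
Proof.
case=> a [b [a0 b0 e1 e2]] [a' [b' [a0' b0' e1' e2']]].
exists (a * a'), (b * b'); split; rewrite ?mulf_neq0 //= ?e1 ?e2 ?e1' ?e2'.
  by rewrite -scalemxAl -scalemxAr scalerA.
by rewrite -scalemxAl -scalemxAr scalerA.
Qed.

Lemma gmul_Psi (Kp Kl : fieldType) (cp dp : Kp) (cl dl : Kl)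
  (hcdp : cp ^+ 2 + dp ^+ 2 + 1 = 0) (hcdl : cl ^+ 2 + dl ^+ 2 + 1 = 0) x y :
  gmul (Psi cp dp cl dl x) (Psi cp dp cl dl y) = Psi cp dp cl dl (qmul x y).
Proof. by rewrite /gmul /Psi /= !P_mul. Qed.

Lemma Psi_one (Kp Kl : fieldType) (cp dp : Kp) (cl dl : Kl) :
  Psi cp dp cl dl qone = gone Kp Kl.
Proof. by rewrite /Psi !P_one. Qed.

Lemma pe_inv (Kp Kl : fieldType) (chp : [pchar Kp] =i pred0) (chl : [pchar Kl] =i pred0)
  (cp dp : Kp) (cl dl : Kl)
  (hcdp : cp ^+ 2 + dp ^+ 2 + 1 = 0) (hcdl : cl ^+ 2 + dl ^+ 2 + 1 = 0) g x n :
  qnorm x = n%:Z -> (0 < n)%N ->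
  proj_eq g (Psi cp dp cl dl x) -> proj_eq (ginv g) (Psi cp dp cl dl (qconj x)).
Proof.
move=> hn n0 [a [b [a0 b0 e1 e2]]].
have [up ip] := P_inv chp hcdp hn n0.
have [ul il] := P_inv chl hcdl hn n0.
exists (a^-1 * (n%:R)^-1), (b^-1 * (n%:R)^-1); split.
- by rewrite mulf_neq0 ?invr_eq0 ?natr_neq0.
- by rewrite mulf_neq0 ?invr_eq0 ?natr_neq0.
- rewrite /ginv /= e1 invmxZ; first by rewrite ip scalerA.
  by rewrite unitmxZ ?unitfE.
- rewrite /ginv /= e2 invmxZ; first by rewrite il scalerA.
  by rewrite unitmxZ ?unitfE.
Qed.

Lemma pe_Psi_comm (Kp Kl : fieldType) (chp : [pchar Kp] =i pred0)
  (cp dp : Kp) (cl dl : Kl)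
  (hcdp : cp ^+ 2 + dp ^+ 2 + 1 = 0) x z :
  odd `|q0 (qmul x z)| ->
  proj_eq (Psi cp dp cl dl (qmul x z)) (Psi cp dp cl dl (qmul z x)) ->
  qmul x z = qmul z x.
Proof.
move=> hodd [a [b [a0 b0 e1 e2]]].
have h2 : 2%:R != 0 :> Kp by apply: natr_neq0.
have [f0 f1 f2 f3] := P_entries hcdp h2 e1.
have r0 : q0 (qmul z x) = q0 (qmul x z) by rewrite /=; ring.
have a1 : a = 1.
  move: f0; rewrite r0 => f0.
  have nz := intr_odd_neq0 chp hodd.
  apply: (mulIf nz); by rewrite mul1r -f0.
move: f1 f2 f3 f0; rewrite a1 !mul1r => f1 f2 f3 f0.
by apply: qeq; apply: (intr_inj' chp).
Qed.


Lemma zk_cancel (zk u : int) : zk != 0 -> zk * u = 0 -> u = 0.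
Proof. by move=> nz /eqP; rewrite mulf_eq0 (negbTE nz) => /eqP. Qed.

Lemma comm_trans x y z :
  ~~ [&& q1 z == 0, q2 z == 0 & q3 z == 0] ->
  qmul x z = qmul z x -> qmul y z = qmul z y -> qmul x y = qmul y x.
Proof.
case: x => x0 x1 x2 x3; case: y => y0 y1 y2 y3; case: z => z0 z1 z2 z3 /= nz hx hy.
have := congr1 q1 hx; have := congr1 q2 hx; have := congr1 q3 hx.
have := congr1 q1 hy; have := congr1 q2 hy; have := congr1 q3 hy.
rewrite /= => b3 b2 b1 a3 a2 a1.
have A1 : x2 * z3 = x3 * z2 by lia.
have A2 : x3 * z1 = x1 * z3 by lia.
have A3 : x1 * z2 = x2 * z1 by lia.
have B1 : y2 * z3 = y3 * z2 by lia.
have B2 : y3 * z1 = y1 * z3 by lia.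
have B3 : y1 * z2 = y2 * z1 by lia.
suff [C1 C2 C3] : [/\ x2 * y3 - x3 * y2 = 0, x3 * y1 - x1 * y3 = 0 & x1 * y2 - x2 * y1 = 0].
  by apply: qeq => /=; lia.
case: (z1 =P 0) => [e1|n1]; last first.
  have n1' : z1 != 0 by apply/eqP.
  split; apply: (zk_cancel n1').
  - by apply: (@cross3 x2 x3 x1 y2 y3 y1 z2 z3 z1); lia.
  - by apply: (@cross3 x3 x1 x1 y3 y1 y1 z3 z1 z1); lia.
  - by apply: (@cross3 x1 x2 x1 y1 y2 y1 z1 z2 z1); lia.
case: (z2 =P 0) => [e2|n2]; last first.
  have n2' : z2 != 0 by apply/eqP.
  split; apply: (zk_cancel n2').
  - by apply: (@cross3 x2 x3 x2 y2 y3 y2 z2 z3 z2); lia.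
  - by apply: (@cross3 x3 x1 x2 y3 y1 y2 z3 z1 z2); lia.
  - by apply: (@cross3 x1 x2 x2 y1 y2 y2 z1 z2 z2); lia.
case: (z3 =P 0) => [e3|n3]; last first.
  have n3' : z3 != 0 by apply/eqP.
  split; apply: (zk_cancel n3').
  - by apply: (@cross3 x2 x3 x3 y2 y3 y3 z2 z3 z3); lia.
  - by apply: (@cross3 x3 x1 x3 y3 y1 y3 z3 z1 z3); lia.
  - by apply: (@cross3 x1 x2 x3 y1 y2 y3 z1 z2 z3); lia.
by move: nz; rewrite e1 e2 e3 !eqxx.
Qed.


Lemma Gamma_ex p l (Kp Kl : fieldType) (cp dp : Kp) (cl dl : Kl) g :
  Gamma p l cp dp cl dl g -> exists x, inG p l x /\ proj_eq g (Psi cp dp cl dl x).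
Proof. by case=> x0 [x1 [x2 [x3 [h1 h2]]]]; exists (Q x0 x1 x2 x3). Qed.

Lemma Gamma_in p l (Kp Kl : fieldType) (cp dp : Kp) (cl dl : Kl) g x :
  inG p l x -> proj_eq g (Psi cp dp cl dl x) -> Gamma p l cp dp cl dl g.
Proof. by move=> h1 h2; exists (q0 x), (q1 x), (q2 x), (q3 x). Qed.

Lemma comm_with p l (Kp Kl : fieldType) (chp : [pchar Kp] =i pred0)
  (cp dp : Kp) (cl dl : Kl)
  (hcdp : cp ^+ 2 + dp ^+ 2 + 1 = 0) (hcdl : cl ^+ 2 + dl ^+ 2 + 1 = 0)
  (op : odd p) (ol : odd l) H g z u x :
  is_abelian H -> H g -> proj_eq g (Psi cp dp cl dl z) -> inG p l z ->
  H u -> proj_eq u (Psi cp dp cl dl x) -> inG p l x -> qmul x z = qmul z x.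
Proof.
move=> ab Hg gz iz Hu ux ix.
apply: (pe_Psi_comm chp (cl := cl) (dl := dl) hcdp).
  have [_ tz] := (inG_iff _ op ol).1 iz.
  have [_ tx] := (inG_iff _ op ol).1 ix.
  exact: typeAB_re.
rewrite -!(gmul_Psi hcdp hcdl).
apply: (pe_trans (pe_mul (pe_sym ux) (pe_sym gz))).
apply: (pe_trans (ab _ _ Hu Hg)).
exact: pe_mul.
Qed.


Lemma incl p l (Kp Kl : fieldType) (chp : [pchar Kp] =i pred0) (chl : [pchar Kl] =i pred0)
  (cp dp : Kp) (cl dl : Kl)
  (hcdp : cp ^+ 2 + dp ^+ 2 + 1 = 0) (hcdl : cl ^+ 2 + dl ^+ 2 + 1 = 0)
  (op : odd p) (ol : odd l) (G1 G2 : GG Kp Kl -> Prop) g z :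
  maximal_abelian (Gamma p l cp dp cl dl) G1 ->
  is_subgroup (Gamma p l cp dp cl dl) G2 -> is_abelian G2 ->
  G1 g -> G2 g -> proj_eq g (Psi cp dp cl dl z) -> inG p l z ->
  ~~ [&& q1 z == 0, q2 z == 0 & q3 z == 0] ->
  forall h, G2 h -> G1 h.
Proof.
set Ps := Psi cp dp cl dl.
move=> [[s1 sat1 one1 mul1 inv1] ab1 max1] [s2 sat2 one2 mul2 inv2] ab2 g1 g2 gz iz nz.
pose C x := qmul x z = qmul z x.
have C1 : forall x, inG p l x -> G1 (Ps x) -> C x.
  move=> x ix hx; exact: (comm_with chp hcdp hcdl op ol ab1 g1 gz iz hx (pe_refl _) ix).
have C2 : forall x, inG p l x -> G2 (Ps x) -> C x.
  move=> x ix hx; exact: (comm_with chp hcdp hcdl op ol ab2 g2 gz iz hx (pe_refl _) ix).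
have CM : forall a b, C a -> C b -> C (qmul a b).
  move=> a b ha hb; rewrite /C -qmulA hb qmulA ha -qmulA //.
have CC : forall a b, C a -> C b -> qmul a b = qmul b a.
  move=> a b ha hb; exact: (comm_trans nz ha hb).
have PsM : forall x y, gmul (Ps x) (Ps y) = Ps (qmul x y) by move=> x y; exact: gmul_Psi.
have Ps1 : Ps qone = gone Kp Kl by exact: Psi_one.
pose H' h := exists x y, [/\ inG p l x, inG p l y, G1 (Ps x), G2 (Ps y) & proj_eq h (Ps (qmul x y))].
have sub : is_subgroup (Gamma p l cp dp cl dl) H'.
  split.
  - move=> h [x [y [ix iy _ _ e]]]; apply: Gamma_in e; exact: inG_mul.
  - move=> a b [x [y [ix iy hx hy e]]] ab; exists x, y; split => //.
    exact: pe_trans (pe_sym ab) e.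
  - exists qone, qone; split; rewrite ?Ps1 //; try exact: inG_one.
    exact: pe_refl.
  - move=> a b [x [y [ix iy hx hy e]]] [x' [y' [ix' iy' hx' hy' e']]].
    exists (qmul x x'), (qmul y y'); split; try exact: inG_mul.
    + by rewrite -PsM; apply: mul1.
    + by rewrite -PsM; apply: mul2.
    + apply: (pe_trans (pe_mul e e')); rewrite PsM.
      have yx : qmul y x' = qmul x' y by apply: CC; [exact: C2 | exact: C1].
      rewrite -qmulA [qmul y _]qmulA yx -qmulA qmulA; exact: pe_refl.
  - move=> a [x [y [ix iy hx hy e]]].
    have [n [hn n0]] := inG_norm op ol (inG_mul op ol ix iy).
    have ei := pe_inv chp chl hcdp hcdl hn n0 e.
    exists (qconj x), (qconj y); split; try exact: inG_conj.
    + have [m [hm m0]] := inG_norm op ol ix.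
      apply: sat1 (inv1 _ hx) _; apply: (pe_inv chp chl hcdp hcdl hm m0); exact: pe_refl.
    + have [m [hm m0]] := inG_norm op ol iy.
      apply: sat2 (inv2 _ hy) _; apply: (pe_inv chp chl hcdp hcdl hm m0); exact: pe_refl.
    + have xy : qmul x y = qmul y x by apply: CC; [exact: C1 | exact: C2].
      by move: ei; rewrite xy qconjM.
have ab' : is_abelian H'.
  move=> a b [x [y [ix iy hx hy e]]] [x' [y' [ix' iy' hx' hy' e']]].
  apply: (pe_trans (pe_mul e e')); apply: pe_trans (pe_mul (pe_sym e') (pe_sym e)).
  rewrite !PsM.
  rewrite (CC (qmul x y) (qmul x' y')); first exact: pe_refl.
    by apply: CM; [exact: C1 | exact: C2].
  by apply: CM; [exact: C1 | exact: C2].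
have inc1 : forall h, G1 h -> H' h.
  move=> h h1; have [x [ix e]] := Gamma_ex (s1 _ h1).
  exists x, qone; split; rewrite ?Ps1 ?qmul1 //; first exact: inG_one.
  exact: sat1 h1 e.
have inc2 : forall h, G2 h -> H' h.
  move=> h h2; have [x [ix e]] := Gamma_ex (s2 _ h2).
  exists qone, x; split; rewrite ?Ps1 ?qmul1l //; first exact: inG_one.
  exact: sat2 h2 e.
move=> h h2; exact: (max1 H' sub ab' inc1 h (inc2 h h2)).
Qed.


Unset Implicit Arguments. Set Strict Implicit.

Theorem lemma2p4 (p l : nat) (Kp Kl : fieldType)
  (hp : prime p) (hl : prime l) (hpo : odd p) (hlo : odd l) (hpl : p != l)
  (chKp : [pchar Kp] =i pred0) (chKl : [pchar Kl] =i pred0)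
  (cp dp : Kp) (cl dl : Kl)
  (hcdp : cp ^+ 2 + dp ^+ 2 + 1 = 0) (hcdl : cl ^+ 2 + dl ^+ 2 + 1 = 0)
  (G1 G2 : GG Kp Kl -> Prop) :
  maximal_abelian (Gamma p l cp dp cl dl) G1 ->
  maximal_abelian (Gamma p l cp dp cl dl) G2 ->
  ~ (forall g, G1 g <-> G2 g) ->
  forall g, G1 g -> G2 g -> proj_eq g (gone Kp Kl).
Proof.
move=> m1 m2 ne g g1 g2.
have m1' := m1; have m2' := m2.
case: m1' => [s1 ab1 _]; case: m2' => [s2 ab2 _].
have [sub1 _ _ _ _] := s1.
have [z [iz gz]] := Gamma_ex (sub1 _ g1).
case nz: [&& q1 z == 0, q2 z == 0 & q3 z == 0].
  case/and3P: nz => /eqP e1 /eqP e2 /eqP e3.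
  have ez : z = Q (q0 z) 0 0 0 by apply: qeq.
  apply: (pe_trans gz); rewrite ez /Psi !P_scal.
  have o := inG_re hpo hlo iz.
  exists (q0 z)%:~R, (q0 z)%:~R; split => //; exact: intr_odd_neq0.
exfalso; apply: ne => h; split.
  move=> h1; exact: (@incl p l Kp Kl chKp chKl cp dp cl dl hcdp hcdl hpo hlo G2 G1 g z m2 s1 ab1 g2 g1 gz iz (negbT nz) h h1).
move=> h2; exact: (@incl p l Kp Kl chKp chKl cp dp cl dl hcdp hcdl hpo hlo G1 G2 g z m1 s2 ab2 g1 g2 gz iz (negbT nz) h h2).
Qed.
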